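(* Let $I=I_{\mathbf a,\mathbf b}\subset S=K[x,y]$ be a nonzero monomial ideal. Then: (a) if $a_m>0$, then $\mathrm{v}_{\mathfrak{p}_x}(I^k)=k(a_m+b_m)-1$ for all $k\ge1$; (b) if $b_1>0$, then $\mathrm{v}_{\mathfrak{p}_y}(I^k)=k(a_1+b_1)-1$ for all $k\ge1$.
   Context: $S=K[x,y]$ over a field $K$, standard graded, $S_d$ its degree-$d$ component. Every nonzero monomial ideal $I$ of $S$ has minimal monomial generating set $\{x^{a_1}y^{b_1},\dots,x^{a_m}y^{b_m}\}$ with $a_1>\dots>a_m\ge0$ and $0\le b_1<\dots<b_m$; this is denoted $I=I_{\mathbf a,\mathbf b}$. $\mathfrak{p}_x=(x)$, $\mathfrak{p}_y=(y)$. For a graded ideal $J$ and $\mathfrak{p}\in\operatorname{Ass}(J)$, $\mathrm{v}_\mathfrak{p}(J)=\min\{d:\exists f\in S_d \text{ with } (J:f)=\mathfrak{p}\}$. *)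

(* Defs.v *)
From mathcomp Require Import all_boot all_order all_algebra.
From mathcomp.multinomials Require Export mpoly.
Set Implicit Arguments. Unset Strict Implicit. Unset Printing Implicit Defensive.
Import GRing.Theory.
Local Open Scope ring_scope.

Section Defs.
Variable K : fieldType.
Local Notation S := {mpoly K[2]}.

Definition varx : S := 'X_(@Ordinal 2 0 isT).
Definition vary : S := 'X_(@Ordinal 2 1 isT).

Definition xymon (a b : nat) : S := varx ^+ a * vary ^+ b.

Definition subsetS := S -> Prop.

Definition ideal_gen (G : subsetS) : subsetS :=
  fun f => exists s : seq (S * S),
    (forall p, p \in s -> G p.2) /\ f = \sum_(p <- s) p.1 * p.2.

Definition ideal_pow (J : subsetS) (k : nat) : subsetS :=
  ideal_gen (fun g => exists gs : seq S,
    size gs = k /\ (forall h, h \in gs -> J h) /\ g = \prod_(h <- gs) h).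

Definition colon (J : subsetS) (f : S) : subsetS := fun g => J (g * f).

Definition same_set (A B : subsetS) : Prop := forall g, A g <-> B g.

Definition px : subsetS := ideal_gen (fun g => g = varx).
Definition py : subsetS := ideal_gen (fun g => g = vary).

(* S_d : homogeneous polynomials of degree d (standard grading; 0 included). *)
Definition in_Sd (d : nat) (f : S) : Prop := f \is d.-homog.

(* v_p(J) = d : d is the minimum of { d | exists f in S_d with (J : f) = p }
   (in particular this set is nonempty, so p in Ass(J)). *)
Definition is_vnumber (J p : subsetS) (d : nat) : Prop :=
  (exists f, in_Sd d f /\ same_set (colon J f) p) /\
  (forall d' f, in_Sd d' f -> same_set (colon J f) p -> (d <= d')%N).

Definition mon_ideal (a b : seq nat) : subsetS :=
  ideal_gen (fun g => exists2 i, (i < size a)%N & g = xymon (nth 0%N a i) (nth 0%N b i)).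

Definition admissible (a b : seq nat) : Prop :=
  (0 < size a)%N /\ size a = size b /\ sorted gtn a /\ sorted ltn b.

End Defs.

(* Main.v *)
Require Import Defs.
From mathcomp Require Import all_boot all_order all_algebra.
From mathcomp.multinomials Require Import mpoly.
From mathcomp Require Import zify.
Set Implicit Arguments. Unset Strict Implicit. Unset Printing Implicit Defensive.
Import GRing.Theory.
Local Open Scope ring_scope.

Section Gen.
Variable K : fieldType.
Local Notation S := {mpoly K[2]}.
Local Notation M := 'X_{1..2}.

Variables (j j' : 'I_2).
Hypothesis jj : j != j'.

Lemma ord2_cases (i : 'I_2) : i = j \/ i = j'.
Proof.
case: i j j' jj => [[|[|i]] Hi] [[|[|x]] Hx] [[|[|y]] Hy] //= _;
  try (left; exact: val_inj); try (right; exact: val_inj).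
Qed.

Lemma mdeg2 (m : M) : mdeg m = (m j + m j')%N.
Proof.
rewrite mdegE big_ord_recr big_ord_recr big_ord0 /= add0n.
case: j j' jj => [[|[|x]] Hx] [[|[|y]] Hy] //= _.
- by congr (m _ + m _)%N; apply: val_inj.
- by rewrite addnC; congr (m _ + m _)%N; apply: val_inj.
Qed.

Definition Qm (A B k : nat) (m : M) : bool :=
  ((k * A)%N < m j)%N || (((k * A)%N == m j) && ((k * B)%N <= m j')%N).

Lemma Q0 A B m : Qm A B 0 m.
Proof. rewrite /Qm; lia. Qed.

Lemma QD A B k1 k2 m1 m2 : Qm A B k1 m1 -> Qm A B k2 m2 -> Qm A B (k1 + k2) (m1 + m2)%MM.
Proof. rewrite /Qm !mnmDE mulnDl; lia. Qed.

Definition allQ A B k (g : S) := forall m, m \in msupp g -> Qm A B k m.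

Lemma allQ0 (A B : nat) g : allQ A B 0 g.
Proof. by move=> m _; apply: Q0. Qed.

Lemma allQ_mul (A B k1 k2 : nat) p q : allQ A B k1 p -> allQ A B k2 q -> allQ A B (k1 + k2) (p * q).
Proof.
move=> Hp Hq m /msuppM_le /allpairsP [[m1 m2] [/= H1 H2 ->]].
exact: QD (Hp _ H1) (Hq _ H2).
Qed.

Lemma allQ_sum (A B k : nat) (T : eqType) (r : seq T) (F : T -> S) :
  (forall t, t \in r -> allQ A B k (F t)) -> allQ A B k (\sum_(t <- r) F t).
Proof.
elim: r => [|t r IH] H; first by rewrite big_nil => m; rewrite msupp0.
rewrite big_cons => m /msuppD_le; rewrite mem_cat => /orP [Hm|Hm].
  by apply: (H t) => //; rewrite mem_head.
by apply: IH Hm => t' Ht'; apply: H; rewrite inE Ht' orbT.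
Qed.

Lemma allQ_prod (A B : nat) (gs : seq S) :
  (forall h, h \in gs -> allQ A B 1 h) -> allQ A B (size gs) (\prod_(h <- gs) h).
Proof.
elim: gs => [|h gs IH] H.
  rewrite big_nil => m; rewrite msupp1 inE => /eqP ->; exact: Q0.
rewrite big_cons /= -add1n; apply: allQ_mul.
  by apply: H; rewrite mem_head.
by apply: IH => h' Hh; apply: H; rewrite inE Hh orbT.
Qed.

Lemma allQ_gen (A B k : nat) (G : subsetS K) f :
  (forall g, G g -> allQ A B k g) -> ideal_gen G f -> allQ A B k f.
Proof.
move=> HG [s [Hs ->]]; apply: allQ_sum => p Hp.
rewrite -[k]add0n; apply: allQ_mul; first exact: allQ0.
exact: HG (Hs _ Hp).
Qed.

Lemma allQ_pow (A B k : nat) (G : subsetS K) f :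
  (forall g, G g -> allQ A B 1 g) -> ideal_pow (ideal_gen G) k f -> allQ A B k f.
Proof.
move=> HG; apply: allQ_gen => g [gs [<- [Hgs ->]]].
apply: allQ_prod => h /Hgs; exact: allQ_gen.
Qed.

Lemma allQX (A B k : nat) m : allQ A B k 'X_[m] <-> Qm A B k m.
Proof.
split; first by move=> H; apply: H; rewrite msuppX mem_head.
by move=> H m'; rewrite msuppX inE => /eqP ->.
Qed.

Lemma div_gen (H : subsetS K) (e : M) (g : S) :
  H 'X_[e] -> (forall m, m \in msupp g -> (e <= m)%MM) -> ideal_gen H g.
Proof.
move=> He Hg.
exists [seq (g@_m *: 'X_[m - e], 'X_[e]) | m <- msupp g]; split.
  by move=> p /mapP [m _ ->].
rewrite big_map {1}(mpolyE g) big_seq [RHS]big_seq; apply: eq_bigr => m Hm.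
by rewrite -scalerAl -mpolyXD submK // Hg.
Qed.

Lemma le_of (e m : M) : (e j <= m j)%N -> (e j' <= m j')%N -> (e <= m)%MM.
Proof.
move=> H1 H2; apply/mnm_lepP => i; by case: (ord2_cases i) => ->.
Qed.

Lemma prod_nseq (x : S) k : \prod_(h <- nseq k x) h = x ^+ k.
Proof. elim: k => [|k IH]; by rewrite ?big_nil ?expr0 // big_cons IH exprS. Qed.

Lemma Xpow_gen (G : subsetS K) (e : M) k :
  G 'X_[e] ->
  (fun g => exists gs : seq S, size gs = k /\
     (forall h, h \in gs -> ideal_gen G h) /\ g = \prod_(h <- gs) h) 'X_[e *+ k].
Proof.
move=> He; exists (nseq k 'X_[e]); split; first by rewrite size_nseq.
split; last by rewrite prod_nseq mpolyXn.
move=> h /nseqP [-> _]; exists [:: (1, 'X_[e])]; split.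
  by move=> p; rewrite inE => /eqP ->.
by rewrite big_seq1 mul1r.
Qed.

Lemma px_allQ g : ideal_gen (fun g => g = 'X_j) g -> allQ 1 0 1 g.
Proof.
apply: allQ_gen => h ->; apply/allQX; rewrite /Qm !mnm1E eqxx (negbTE jj) /=.
by [].
Qed.

Lemma main (G : subsetS K) (A B k : nat) (e : M) :
  (forall g, G g -> allQ A B 1 g) -> G 'X_[e] -> e j = A -> e j' = B ->
  (0 < A)%N -> (1 <= k)%N ->
  is_vnumber (ideal_pow (ideal_gen G) k) (ideal_gen (fun g => g = 'X_j))
    (k * (A + B) - 1).
Proof.
move=> HG He ej ej' A0 k1.
have jj'F : (j' == j) = false by rewrite eq_sym (negbTE jj).
split.
  pose ek := (e *+ k - U_(j))%MM.
  have ekj : ek j = (A * k - 1)%N by rewrite /ek mnmBE mulmnE mnm1E eqxx ej.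
  have ekj' : ek j' = (B * k)%N by rewrite /ek mnmBE mulmnE mnm1E (negbTE jj) ej' subn0.
  exists 'X_[ek]; split.
    rewrite /in_Sd dhomogX; apply/eqP; change (mdeg ek = (k * (A + B) - 1)%N); rewrite mdeg2 ekj ekj'; lia.
  move=> g; split.
    move=> /(allQ_pow HG) Hq; apply: (@div_gen _ U_(j)%MM); first by [].
    move=> m Hm; apply: le_of; rewrite !mnm1E ?eqxx ?jj'F ?(negbTE jj) //.
    case: (posnP (m j)) => // mj0; exfalso.
    have Hin : (ek + m)%MM \in msupp (g * 'X_[ek]).
      by rewrite mcoeff_msupp mcoeffMX -mcoeff_msupp.
    move: (Hq _ Hin); rewrite /Qm mnmDE mnmDE ekj mj0; lia.
  move=> /px_allQ Hg; rewrite /ideal_pow; apply: (@div_gen _ (e *+ k)%MM).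
    exact: Xpow_gen.
  move=> m; rewrite (perm_mem (msuppMX _ _)) => /mapP [m' Hm' ->].
  move: (Hg _ Hm'); rewrite /Qm => Hq.
  apply: le_of; rewrite mnmDE mulmnE ?ekj ?ekj' ?ej ?ej'; lia.
move=> d' f Hf Hcol.
have HX : allQ A B k (f * 'X_[U_(j)]).
  apply: (allQ_pow HG); rewrite mulrC; apply/Hcol.
  by exists [:: (1, 'X_j)]; split; [move=> p; rewrite inE => /eqP -> | rewrite big_seq1 mul1r].
have HY : ~ ideal_pow (ideal_gen G) k ('X_[U_(j') *+ (k * B)] * f).
  move=> /Hcol /px_allQ H.
  have := H (U_(j') *+ (k * B))%MM; rewrite msuppX mem_head => /(_ isT).
  by rewrite /Qm mulmnE mnm1E jj'F ?(negbTE jj).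
have [u Hu Hlt] : exists2 u, u \in msupp f & (u j < k * A)%N.
  case: (boolP (has (fun u : M => u j < k * A)%N (msupp f))) => [/hasP [u H1 H2]|/hasPn Hn].
    by exists u.
  exfalso; apply: HY; rewrite /ideal_pow mulrC; apply: (@div_gen _ (e *+ k)%MM).
    exact: Xpow_gen.
  move=> m; rewrite (perm_mem (msuppMX _ _)) => /mapP [m' Hm' ->].
  move: (Hn _ Hm') => /= Hq.
  apply: le_of; rewrite mnmDE !mulmnE !mnm1E ?eqxx ?jj'F ?(negbTE jj) ?ej ?ej' /=; lia.
have Hin : (U_(j) + u)%MM \in msupp (f * 'X_[U_(j)]).
  by rewrite mcoeff_msupp mcoeffMX -mcoeff_msupp.
move: (HX _ Hin); rewrite /Qm !mnmDE !mnm1E eqxx (negbTE jj) /= => Hq.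
have := dhomog_mf Hf Hu => Hd; have Hd' : mdeg u = d' by exact: Hd.
rewrite mdeg2 in Hd'; lia.
Qed.

End Gen.

Local Close Scope ring_scope.
Definition j0 : 'I_2 := @Ordinal 2 0 isT.
Definition j1 : 'I_2 := @Ordinal 2 1 isT.
Definition mon (p q : nat) : 'X_{1..2} := (U_(j0) *+ p + U_(j1) *+ q)%MM.

Lemma xymonE (K : fieldType) p q : xymon K p q = 'X_[mon p q].
Proof. by rewrite /xymon /varx /vary !mpolyXn -mpolyXD. Qed.

Lemma mon0 p q : mon p q j0 = p.
Proof. by rewrite /mon mnmDE !mulmnE !mnm1E /= mul1n mul0n addn0. Qed.
Lemma mon1 p q : mon p q j1 = q.
Proof. by rewrite /mon mnmDE !mulmnE !mnm1E /= mul1n mul0n. Qed.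

Theorem corollary5p4 (K : fieldType) (a b : seq nat) :
  admissible a b ->
  let m := size a in
  let I := @mon_ideal K a b in
  ((0 < nth 0 a m.-1)%N ->
     forall k, (1 <= k)%N ->
       is_vnumber (ideal_pow I k) (@px K) (k * (nth 0 a m.-1 + nth 0 b m.-1) - 1)) /\
  ((0 < nth 0 b 0)%N ->
     forall k, (1 <= k)%N ->
       is_vnumber (ideal_pow I k) (@py K) (k * (nth 0 a 0 + nth 0 b 0) - 1)).
Proof.
move=> [Hsz [Hab [Ha Hb]]] m I.
have trg : transitive gtn by move=> y x z /= H1 H2; exact: ltn_trans H2 H1.
have trl : transitive ltn by move=> y x z /= H1 H2; exact: ltn_trans H1 H2.
have j01 : j0 != j1 by [].
have j10 : j1 != j0 by [].
split.
- move=> A0 k k1.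
  apply: (@main K j0 j1 j01 _ _ _ k (mon (nth 0 a m.-1) (nth 0 b m.-1))) => //;
    rewrite ?mon0 ?mon1 //.
  + move=> g [i Hi ->]; rewrite xymonE; apply/allQX; rewrite /Qm !mon0 !mon1 !mul1n.
    have [Hlt|Heq] : (i < m.-1)%N \/ i = m.-1 by rewrite /m; lia.
      have := sorted_ltn_nth trg 0%N Ha; rewrite /m in Hlt.
      move=> /(_ i (size a).-1); rewrite !inE => /(_ Hi) /(_ _) /(_ Hlt) /=.
      by move=> H; rewrite H //; lia.
    by rewrite Heq eqxx leqnn orbT.
  + by exists m.-1; [rewrite /m; lia | rewrite xymonE].
- move=> B0 k k1.
  rewrite addnC.
  apply: (@main K j1 j0 j10 _ _ _ k (mon (nth 0 a 0) (nth 0 b 0))) => //;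
    rewrite ?mon0 ?mon1 //.
  + move=> g [i Hi ->]; rewrite xymonE; apply/allQX; rewrite /Qm !mon0 !mon1 !mul1n.
    have [Hlt|Heq] : (0 < i)%N \/ i = 0%N by lia.
      have H := sorted_ltn_nth trl 0%N Hb 0%N i.
      rewrite !inE -Hab in H.
      have H2 := H (leq_ltn_trans (leq0n _) Hi) Hi Hlt.
      rewrite /= in H2; rewrite H2 //.
    rewrite Heq; lia.
  + by exists 0%N; [lia | rewrite xymonE].
Qed.
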